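(* Let $(V,\mathcal H,\iota,W)$ be an abelian functional theory with set of weights $\Omega$, let $F$ be a facet of $\mathrm{conv}(\Omega)$, and consider the restricted functional theory $(V,\mathcal H_F,\iota_F,\Pi_FW\Pi_F^\dagger)$ on $F$. Then: (1) the restricted theory is abelian; (2) $\Omega_F:=\Omega\cap F$ is its set of weights; (3) $\dim\iota_F^{-1}(\mathrm{span}\{\mathbb 1_F\})=\dim\iota^{-1}(\mathrm{span}\{\mathbb 1\})+1$; (4) for every pure state $\Gamma$ on $\mathcal H$, $\iota^*(\Gamma)\in F$ iff $\Gamma\in\mathcal P_F$; (5) for every density operator $\Gamma$ on $\mathcal H$, $\iota^*(\Gamma)\in F$ iff $\Gamma\in\mathcal E_F$; (6) $\mathcal F_p^{(F)}=\mathcal F_p|_F$; (7) $\mathcal F_e^{(F)}=\mathcal F_e|_F$.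
   Context: A generalized functional theory is a tuple $(V,\mathcal H,\iota,W)$ with $V$ a finite-dimensional real vector space, $\mathcal H$ a finite-dimensional complex Hilbert space, $\iota:V\to i\mathfrak u(\mathcal H)$ linear into the Hermitian operators, $W$ Hermitian; it is abelian if all $\iota(v)$ commute. States are regarded as linear functionals via the trace and $\iota^*$ is the dual map. Weights: $\alpha\in V^*$ with $\mathcal H_\alpha:=\{\psi:\iota(v)\psi=\langle\alpha,v\rangle\psi\ \forall v\}\ne0$; $\Omega$ is the set of weights, and $\mathrm{conv}(\Omega)$ is a convex polytope. For a facet $F$, $\mathcal H_F=\bigoplus_{\omega\in\Omega\cap F}\mathcal H_\omega$, $\Pi_F:\mathcal H\to\mathcal H_F$ the orthogonal projection, $\iota_F(v)=\Pi_F\iota(v)\Pi_F^\dagger$, $\mathbb 1_F$ the identity on $\mathcal H_F$; $\mathcal P_F,\mathcal E_F$ are the pure states and density operators on $\mathcal H_F$ (viewed as states on $\mathcal H$). For any theory, $\mathcal F_p(\rho)=\min\{\mathrm{Tr}(\Gamma W):\Gamma\text{ pure},\iota^*(\Gamma)=\rho\}$ and $\mathcal F_e(\rho)=\min\{\mathrm{Tr}(\Gamma W):\Gamma\text{ density operator},\iota^*(\Gamma)=\rho\}$; $\mathcal F_p^{(F)},\mathcal F_e^{(F)}$ denote those of the restricted theory. *)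

(* Defs.v *)
From HB Require Import structures.
From mathcomp Require Import all_boot all_order all_algebra.
From mathcomp Require Import all_classical all_reals ereal.
From mathcomp Require Import complex.

Set Implicit Arguments.
Unset Strict Implicit.
Unset Printing Implicit Defensive.

Import Order.TTheory GRing.Theory Num.Theory.
Local Open Scope ring_scope.
Local Open Scope complex_scope.
Local Open Scope classical_set_scope.

(* V = R^d is modelled by row vectors 'rV[R]_d (the coordinate
   choice is harmless); the dual V^* is also modelled by 'rV[R]_d with the
   pairing <alpha, v> = sum_k alpha_k v_k.  The Hilbert space H = C^n is
   modelled by column vectors 'cV[R[i]]_n.  A linear map iota_map : V -> iu(H)
   is given by its values A k on the standard basis (A k Hermitian). *)

Section Defs.
Variable R : realType.
Local Notation C := R[i].

Definition adjmx (p q : nat) (M : 'M[C]_(p, q)) : 'M[C]_(q, p) :=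
  (map_mx (@conjc R) M)^T.

Definition is_herm (p : nat) (M : 'M[C]_p) : Prop := adjmx M = M.

Variable d : nat.

Definition dpair (alpha v : 'rV[R]_d) : R := \sum_(k < d) alpha 0 k * v 0 k.

Section Theory.
Variable n : nat.
Variable A : 'I_d -> 'M[C]_n.

Definition iota_map (v : 'rV[R]_d) : 'M[C]_n := \sum_(k < d) (v 0 k)%:C *: A k.

Definition abelian_th : Prop :=
  forall v w : 'rV[R]_d, iota_map v *m iota_map w = iota_map w *m iota_map v.

Definition in_wspace (alpha : 'rV[R]_d) (psi : 'cV[C]_n) : Prop :=
  forall v : 'rV[R]_d, iota_map v *m psi = (dpair alpha v)%:C *: psi.

Definition is_weight (alpha : 'rV[R]_d) : Prop :=
  exists psi : 'cV[C]_n, psi != 0 /\ in_wspace alpha psi.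

Definition weight_set : set 'rV[R]_d := [set alpha | is_weight alpha].

Definition in_HF (F : set 'rV[R]_d) (psi : 'cV[C]_n) : Prop :=
  exists (k : nat) (om : 'I_k -> 'rV[R]_d) (phi : 'I_k -> 'cV[C]_n),
    (forall j, is_weight (om j) /\ F (om j) /\ in_wspace (om j) (phi j)) /\
    psi = \sum_(j < k) phi j.

(* iota_map^* (Gamma) in V^*, Gamma seen as a functional via the trace *)
Definition istar (G : 'M[C]_n) : 'rV[R]_d := \row_(k < d) complex.Re (\tr (G *m A k)).

Definition pre_span1 : set 'rV[R]_d :=
  [set v | exists c : R, iota_map v = (c%:C)%:M].

End Theory.

Definition density_op (n : nat) (G : 'M[C]_n) : Prop :=
  is_herm G /\ (forall psi : 'cV[C]_n, 0 <= (adjmx psi *m G *m psi) 0 0)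
  /\ \tr G = 1.

Definition pure_state (n : nat) (G : 'M[C]_n) : Prop :=
  exists psi : 'cV[C]_n, (adjmx psi *m psi) 0 0 = 1 /\ G = psi *m adjmx psi.

(* F_p and F_e; the minimum over an empty set is +oo *)
Definition Fp (n : nat) (A : 'I_d -> 'M[C]_n) (W : 'M[C]_n) (rho : 'rV[R]_d)
  : \bar R :=
  ereal_inf [set y | exists G : 'M[C]_n,
     pure_state G /\ istar A G = rho /\ y = (complex.Re (\tr (G *m W)))%:E].

Definition Fe (n : nat) (A : 'I_d -> 'M[C]_n) (W : 'M[C]_n) (rho : 'rV[R]_d)
  : \bar R :=
  ereal_inf [set y | exists G : 'M[C]_n,
     density_op G /\ istar A G = rho /\ y = (complex.Re (\tr (G *m W)))%:E].

Definition has_dim (S : set 'rV[R]_d) (k : nat) : Prop :=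
  exists B : 'M[R]_(k, d), row_free B /\ (forall v, S v <-> (v <= B)%MS).

Definition conv_hull (S : set 'rV[R]_d) : set 'rV[R]_d :=
  [set x | exists (k : nat) (p : 'I_k -> 'rV[R]_d) (l : 'I_k -> R),
     (forall j, S (p j)) /\ (forall j, 0 <= l j) /\ \sum_(j < k) l j = 1 /\
     x = \sum_(j < k) l j *: p j].

Definition affdim_ge (S : set 'rV[R]_d) (k : nat) : Prop :=
  exists p : 'I_k.+1 -> 'rV[R]_d, (forall j, S (p j)) /\
    row_free (\matrix_(j < k) (p (lift ord0 j) - p ord0)).

Definition has_affdim (S : set 'rV[R]_d) (k : nat) : Prop :=
  affdim_ge S k /\ ~ affdim_ge S k.+1.

Definition is_face (Q F : set 'rV[R]_d) : Prop :=
  exists (v : 'rV[R]_d) (c : R), (forall x, Q x -> dpair x v <= c) /\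
    F = [set x | Q x /\ dpair x v = c].

Definition is_facet (Q F : set 'rV[R]_d) : Prop :=
  is_face Q F /\ (exists x, F x) /\
  exists k : nat, has_affdim F k /\ has_affdim Q k.+1.

(* restricted theory (V, H_F, Pi_F iota_map Pi_F^dagger, Pi_F W Pi_F^dagger),
   with H_F identified with C^m through a co-isometry P : C^n -> C^m *)
Definition restrA (n m : nat) (P : 'M[C]_(m, n)) (A : 'I_d -> 'M[C]_n)
  : 'I_d -> 'M[C]_m := fun k => P *m A k *m adjmx P.

Definition restrW (n m : nat) (P : 'M[C]_(m, n)) (W : 'M[C]_n) : 'M[C]_m :=
  P *m W *m adjmx P.

(* P_F and E_F : pure_state states / density_op operators on H_F, viewed on H *)
Definition in_PF (n m : nat) (P : 'M[C]_(m, n)) (G : 'M[C]_n) : Prop :=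
  exists G' : 'M[C]_m, pure_state G' /\ G = adjmx P *m G' *m P.

Definition in_EF (n m : nat) (P : 'M[C]_(m, n)) (G : 'M[C]_n) : Prop :=
  exists G' : 'M[C]_m, density_op G' /\ G = adjmx P *m G' *m P.

End Defs.

(* Main.v *)
Require Import Defs.
From HB Require Import structures.
From mathcomp Require Import all_boot all_order all_algebra.
From mathcomp Require Import all_classical all_reals ereal.
From mathcomp Require Import complex.
From mathcomp Require Import lra zify ring.

Set Implicit Arguments.
Unset Strict Implicit.
Unset Printing Implicit Defensive.
Import Order.TTheory GRing.Theory Num.Theory.
Local Open Scope ring_scope.
Local Open Scope complex_scope.

Module Helpers.
Section Adj.
Variable R : realType.
Local Notation C := R[i].

Lemma adjmxE p q (M : 'M[C]_(p,q)) i j : adjmx M i j = conjc (M j i).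
Proof. by rewrite !mxE. Qed.

Lemma adjmxK p q (M : 'M[C]_(p,q)) : adjmx (adjmx M) = M.
Proof. by apply/matrixP=> i j; rewrite !adjmxE conjcK. Qed.

Lemma adjmxM p q r (M : 'M[C]_(p,q)) (N : 'M[C]_(q,r)) :
  adjmx (M *m N) = adjmx N *m adjmx M.
Proof. by rewrite /adjmx map_mxM trmx_mul. Qed.

Lemma adjmxD p q (M N : 'M[C]_(p,q)) : adjmx (M + N) = adjmx M + adjmx N.
Proof. by rewrite /adjmx map_mxD linearD. Qed.

Lemma adjmxN p q (M : 'M[C]_(p,q)) : adjmx (- M) = - adjmx M.
Proof. by rewrite /adjmx map_mxN linearN. Qed.

Lemma adjmxB p q (M N : 'M[C]_(p,q)) : adjmx (M - N) = adjmx M - adjmx N.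
Proof. by rewrite adjmxD adjmxN. Qed.

Lemma adjmx0 p q : adjmx (0 : 'M[C]_(p,q)) = 0.
Proof. by apply/matrixP=> i j; rewrite !mxE conjc0. Qed.

Lemma adjmx1 p : adjmx (1%:M : 'M[C]_p) = 1%:M.
Proof. by rewrite /adjmx map_mx1 trmx1. Qed.

Lemma adjmxZ p q a (M : 'M[C]_(p,q)) : adjmx (a *: M) = conjc a *: adjmx M.
Proof. by rewrite /adjmx map_mxZ linearZ. Qed.

Lemma adjmx_sum p q I (r : seq I) (P : pred I) (F : I -> 'M[C]_(p,q)) :
  adjmx (\sum_(i <- r | P i) F i) = \sum_(i <- r | P i) adjmx (F i).
Proof.
apply/matrixP=> a b; rewrite adjmxE !summxE rmorph_sum; apply: eq_bigr => i _.
by rewrite adjmxE.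
Qed.

Lemma mxtrace_adj p (M : 'M[C]_p) : \tr (adjmx M) = conjc (\tr M).
Proof. by rewrite /mxtrace rmorph_sum; apply: eq_bigr => i _; rewrite adjmxE. Qed.

Lemma adj_diag p (dd : 'rV[C]_p) : adjmx (diag_mx dd) = diag_mx (map_mx conjc dd).
Proof.
apply/matrixP=> i j; rewrite !mxE rmorphMn.
by case: (eqVneq i j) => [->|ne] //; rewrite eq_sym (negPf ne) !mulr0n.
Qed.

End Adj.

Section Spec.
Variable R : realType.
Local Notation C := R[i].

Lemma conj_real (z : C) : conjc z = z -> (complex.Re z)%:C = z.
Proof. by case: z => a b /= [] hb; congr (_ +i* _); lra. Qed.

Lemma iota_delta d n (A : 'I_d -> 'M[C]_n) k : iota_map A (delta_mx 0 k) = A k.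
Proof.
rewrite /iota_map (bigD1 k) //= big1 ?addr0.
  by rewrite mxE !eqxx /= scale1r.
by move=> j /negPf njk; rewrite mxE eqxx njk /= scale0r.
Qed.

Lemma spectral_decomp d n (A : 'I_d -> 'M[C]_n) :
  (forall k, is_herm (A k)) -> abelian_th A ->
  exists U : 'M[C]_n, exists lam : 'I_d -> 'I_n -> R,
   [/\ U *m adjmx U = 1%:M, adjmx U *m U = 1%:M &
     forall k, A k = U *m diag_mx (\row_i (lam k i)%:C) *m adjmx U].
Proof.
move=> Ah Ab.
have [] := @cotrigonalization C n [seq A k | k <- enum 'I_d].
  move=> _ _ /mapP[k _ ->] /mapP[j _ ->].
  by rewrite /comm_mx -!(iota_delta A) Ab.
move=> P Pu /allP Ptr.
have PP : P *m adjmx P = 1%:M.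
  by move/unitarymxP: Pu; rewrite /adjmx map_trmx.
have PP' : adjmx P *m P = 1%:M by apply: mulmx1C.
pose B k := P *m A k *m adjmx P.
have Btr k : is_trig_mx (B k).
  have := Ptr (A k) (map_f _ (mem_enum _ k)).
  rewrite /= /similar_to (@conjymx C n P (A k) Pu).
  have -> : (P ^t* )%sesqui = adjmx P by rewrite /adjmx map_trmx.
  by [].
have Bh k : adjmx (B k) = B k.
  by rewrite /B !adjmxM adjmxK Ah mulmxA.
have Bdiag k i j : i != j -> B k i j = 0.
  move=> ne; case: (ltngtP i j) => [lt|gt|eq].
  - by move/is_trig_mxP : (Btr k) => ->.
  - by rewrite -(Bh k) adjmxE; move/is_trig_mxP : (Btr k) => -> //; rewrite conjc0.
  - by move: ne; rewrite (val_inj eq) eqxx.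
have Breal k i : conjc (B k i i) = B k i i by rewrite -{2}(Bh k) adjmxE.
exists (adjmx P), (fun k i => complex.Re (B k i i)); rewrite adjmxK; split => // k.
have -> : diag_mx (\row_i (complex.Re (B k i i))%:C) = B k.
  move: (Breal k) (Bdiag k); move: (B k) => Bk Hr Hd.
  apply/matrixP=> i j; rewrite !mxE; case: (eqVneq i j) => [->|ne].
    by rewrite mulr1n (conj_real (Hr _)).
  by rewrite mulr0n Hd.
by rewrite /B !mulmxA PP' mul1mx -mulmxA PP' mulmx1.
Qed.


Lemma colext p q (X Y : 'M[C]_(p, q)) :
  (forall i, X *m delta_mx i (0 : 'I_1) = Y *m delta_mx i (0 : 'I_1)) -> X = Y.
Proof.
move=> H; apply/matrixP => a i; have := congr1 (fun M : 'M[C]_(p,1) => M a 0) (H i).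
by rewrite -!colE !mxE.
Qed.

Lemma cRe_sum I (r : seq I) (P : pred I) (f : I -> C) :
  complex.Re (\sum_(i <- r | P i) f i) = \sum_(i <- r | P i) complex.Re (f i).
Proof.
by apply: (big_morph (@complex.Re R) (id1 := 0) (op1 := +%R)) => // [[a b] [c e]].
Qed.

Lemma conjcR (r : R) : conjc (r%:C) = r%:C :> C.
Proof. by rewrite /= oppr0. Qed.

Lemma cReD (x y : C) : complex.Re (x + y) = complex.Re x + complex.Re y.
Proof. by case: x; case: y. Qed.

Lemma cReMr (r : R) (w : C) : complex.Re (r%:C * w) = r * complex.Re w.
Proof. by case: w => a b /=; rewrite mul0r subr0. Qed.

Lemma cReMl (r : R) (w : C) : complex.Re (w * r%:C) = complex.Re w * r.
Proof. by rewrite mulrC cReMr mulrC. Qed.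

Lemma cge0_Re (z : C) : 0 <= z -> 0 <= complex.Re z.
Proof. by rewrite lecE => /andP[]. Qed.

Lemma cge0_real (z : C) : 0 <= z -> z = (complex.Re z)%:C.
Proof. by move=> /ger0_Im; case: z => a b /= ->. Qed.

Lemma dpairE d (a v : 'rV[R]_d) : dpair a v = (a *m v^T) 0 0.
Proof. by rewrite /dpair mxE; apply: eq_bigr => k _; rewrite mxE. Qed.

Lemma dpair_delta d (a : 'rV[R]_d) k : dpair a (delta_mx 0 k) = a 0 k.
Proof.
rewrite /dpair (bigD1 k) //= big1 ?addr0; first by rewrite mxE !eqxx mulr1.
by move=> j /negPf nj; rewrite mxE nj andbF mulr0.
Qed.

Lemma dpairB d (a b v : 'rV[R]_d) : dpair (a - b) v = dpair a v - dpair b v.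
Proof. by rewrite !dpairE mulmxBl !mxE. Qed.

Lemma dpair_comb d N (l : 'I_N -> R) (p : 'I_N -> 'rV[R]_d) v :
  dpair (\sum_j l j *: p j) v = \sum_j l j * dpair (p j) v.
Proof.
rewrite dpairE mulmx_suml summxE; apply: eq_bigr => j _.
by rewrite -scalemxAl mxE dpairE.
Qed.

Lemma rV_neq0 p q (c : 'M[C]_(p, q)) : c != 0 -> exists i j, c i j != 0.
Proof.
move=> /eqP cn; apply: contrapT => hn; apply: cn; apply/matrixP => i j.
rewrite mxE; case: (eqVneq (c i j) 0) => // h; exfalso; apply: hn; by exists i, j.
Qed.

Lemma cnorm2 (z : C) :
  complex.Re (conjc z * z) = complex.Re z ^+ 2 + complex.Im z ^+ 2.
Proof. by case: z => a b /=; rewrite !expr2 mulNr opprK. Qed.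

Lemma Re_norm_ge0 p (y : 'cV[C]_p) : 0 <= complex.Re ((adjmx y *m y) 0 0).
Proof.
rewrite mxE cRe_sum; apply: sumr_ge0 => j _; rewrite adjmxE cnorm2.
by apply: addr_ge0; apply: sqr_ge0.
Qed.

Lemma vec0 p (y : 'cV[C]_p) : complex.Re ((adjmx y *m y) 0 0) = 0 -> y = 0.
Proof.
rewrite mxE cRe_sum => h; apply/matrixP => j k; rewrite ord1 mxE.
have hp : forall i : 'I_p, true -> 0 <= complex.Re (adjmx y 0 i * y i 0).
  by move=> i _; rewrite adjmxE cnorm2; apply: addr_ge0; apply: sqr_ge0.
have := psumr_eq0P hp h (i := j) isT.
rewrite adjmxE cnorm2; case: (y j 0) => a b /= hab.
have ha : a = 0 by nra.
have hb : b = 0 by nra.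
by rewrite ha hb.
Qed.

End Spec.

Local Open Scope classical_set_scope.
Lemma rowfree_sub (K : fieldType) p q r (X : 'M[K]_(p,q)) (h : 'I_r -> 'I_p) :
  row_free X -> injective h -> row_free (rowsub h X).
Proof.
move=> fX ih; apply/inj_row_free => v; rewrite rowsubE mulmxA => /eqP.
rewrite mulmx_free_eq0 // => /eqP hv.
apply/rowP => j; move/rowP: hv => /(_ (h j)); rewrite !mxE (bigD1 j) //= big1 ?addr0.
  by rewrite !mxE eqxx mulr1.
by move=> l lj; rewrite !mxE (inj_eq ih) (negPf lj) mulr0.
Qed.

Lemma affrank (R : realType) d (S : set 'rV[R]_d) N (M : 'M[R]_(N, d))
    (s0 : 'rV[R]_d) (g : 'I_N -> 'rV[R]_d) k :
  S s0 -> (forall j, S (g j)) -> (forall j, row j M = g j - s0) ->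
  (forall s, S s -> (s - s0 <= M)%MS) -> has_affdim S k -> \rank M = k.
Proof.
move=> S0 Sg Mrow Msub [[p [Sp fr]] nge].
apply/eqP; rewrite eqn_leq; apply/andP; split; last first.
  set D := \matrix_(j < k) (p (lift ord0 j) - p ord0).
  have -> : k = \rank D by move/eqP: fr.
  apply: mxrankS; apply/row_subP => j; rewrite rowK.
  have -> : p (lift ord0 j) - p ord0 = (p (lift ord0 j) - s0) - (p ord0 - s0).
    by rewrite opprB addrA subrK.
  apply: addmx_sub; first exact: Msub.
  by rewrite -scaleN1r; apply: scalemx_sub; exact: Msub.
rewrite leqNgt; apply/negP => lt; apply: nge.
pose f := maxrankfun M.
pose h := @widen_ord k.+1 (\rank M) lt.
exists (fun j : 'I_k.+2 => if unlift ord0 j is Some j' then g (f (h j')) else s0).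
split; first by move=> j; case: (unlift ord0 j).
have -> : \matrix_(j < k.+1) ((fun j : 'I_k.+2 => if unlift ord0 j is Some j' then g (f (h j')) else s0) (lift ord0 j) -
     (fun j : 'I_k.+2 => if unlift ord0 j is Some j' then g (f (h j')) else s0) ord0)
   = rowsub (f \o h) M.
  apply/row_matrixP => j; rewrite rowK row_rowsub liftK unlift_none Mrow.
  by [].
rewrite rowsub_comp; apply: rowfree_sub; first exact: maxrowsub_free.
by move=> a b /(congr1 val) /= ab; apply: val_inj.
Qed.

Section WithU.
Variables (R : realType) (d n : nat) (A : 'I_d -> 'M[R[i]]_n) (U : 'M[R[i]]_n)
  (lam : 'I_d -> 'I_n -> R).
Local Notation C := R[i].
Hypotheses (UU : U *m adjmx U = 1%:M) (UU' : adjmx U *m U = 1%:M)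
  (AE : forall k, A k = U *m diag_mx (\row_i (lam k i)%:C) *m adjmx U).

Definition om i : 'rV[R]_d := \row_k lam k i.
Definition Dv v : 'M[C]_n := diag_mx (\row_i (dpair (om i) v)%:C).
Local Notation e i := (delta_mx i (0:'I_1) : 'cV[C]_n).
Definition u i := U *m e i.

Lemma iotaE v : iota_map A v = U *m Dv v *m adjmx U.
Proof.
rewrite /iota_map.
under eq_bigr do rewrite AE scalemxAl scalemxAr.
rewrite -mulmx_suml -mulmx_sumr; congr (_ *m _ *m _).
apply/matrixP => a b; rewrite summxE !mxE.
case: (eqVneq a b) => [->|ne] /=.
  rewrite mulr1n /dpair rmorph_sum; apply: eq_bigr => k _.
  by rewrite !mxE eqxx mulr1n rmorphM mulrC.
by rewrite mulr0n big1 // => k _; rewrite !mxE (negPf ne) mulr0n mulr0.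
Qed.

Lemma cc_u i : adjmx U *m u i = e i.
Proof. by rewrite /u mulmxA UU' mul1mx. Qed.

Lemma e_neq0 i : e i != 0.
Proof. by apply/eqP => /matrixP/(_ i 0); rewrite !mxE !eqxx => /eqP; rewrite oner_eq0. Qed.

Lemma u_neq0 i : u i != 0.
Proof. by apply/eqP => h; move: (cc_u i); rewrite h mulmx0 => /esym/eqP; rewrite (negPf (e_neq0 i)). Qed.

Lemma Dv_e v i : Dv v *m e i = (dpair (om i) v)%:C *: e i.
Proof.
apply/matrixP => a b; rewrite mul_diag_mx !mxE.
by case: (eqVneq a i) => [->|ne] /=; rewrite ?mulr1 ?mulr0.
Qed.

Lemma iota_u v i : iota_map A v *m u i = (dpair (om i) v)%:C *: u i.
Proof.
by rewrite iotaE /u -!mulmxA (mulmxA (adjmx U)) UU' mul1mx Dv_e scalemxAr.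
Qed.

Lemma psi_U (psi : 'cV[C]_n) : psi = U *m (adjmx U *m psi).
Proof. by rewrite mulmxA UU mul1mx. Qed.

Lemma wspaceP al (psi : 'cV[C]_n) : in_wspace A al psi <->
  forall i, (adjmx U *m psi) i 0 != 0 -> om i = al.
Proof.
set c := adjmx U *m psi.
have key : in_wspace A al psi <-> forall v, Dv v *m c = (dpair al v)%:C *: c.
  split => H v.
    move: (H v); rewrite iotaE => /(congr1 (mulmx (adjmx U))).
    by rewrite !mulmxA UU' mul1mx -!mulmxA -scalemxAr.
  rewrite iotaE {1}(psi_U psi) -/c -!mulmxA (mulmxA (adjmx U) U) UU' mul1mx H.
  by rewrite -scalemxAr /c -psi_U.
rewrite key; clearbody c; split => H.
  move=> i ci; apply/rowP => k; rewrite !mxE.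
  move: (H (delta_mx 0 k)) => /matrixP/(_ i 0); rewrite mul_diag_mx !mxE.
  rewrite !dpair_delta !mxE => h; by case: (mulIf ci h).
move=> v; apply/matrixP => i j; rewrite ord1 mul_diag_mx !mxE.
by case: (eqVneq (c i 0) 0) => [->|/H ->]; rewrite ?mulr0.
Qed.


Lemma weightP al : is_weight A al <-> exists i, om i = al.
Proof.
split.
  move=> [psi [psin /wspaceP H]].
  have cn : adjmx U *m psi != 0.
    by apply: contraNneq psin => h; rewrite (psi_U psi) h mulmx0.
  have [i [j cij]] := rV_neq0 cn; rewrite ord1 in cij.
  by exists i; apply: H.
move=> [i <-]; exists (u i); split; first exact: u_neq0.
apply/wspaceP => j; rewrite cc_u mxE.
by case: (eqVneq j i) => [->|] //=; rewrite eqxx.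
Qed.

Lemma HF_coord (F : set 'rV[R]_d) psi : in_HF A F psi ->
  forall i, (adjmx U *m psi) i 0 != 0 -> F (om i).
Proof.
move=> [k [om' [phi [H ->]]]] i; rewrite mulmx_sumr summxE => hs.
have [j hj] : exists j, (adjmx U *m phi j) i 0 != 0.
  apply: contrapT => hn; move: hs; rewrite big1 ?eqxx // => j _.
  by case: (eqVneq ((adjmx U *m phi j) i 0) 0) => // h; exfalso; apply: hn; exists j.
have [_ [Fj /wspaceP Wj]] := H j.
by rewrite (Wj i hj).
Qed.

Lemma HF_u (F : set 'rV[R]_d) i : F (om i) -> in_HF A F (u i).
Proof.
move=> Fi; exists 1%N, (fun=> om i), (fun=> u i); split; last by rewrite big_ord1.
move=> j; split; first by apply/weightP; exists i.
split => //; apply/wspaceP => l; rewrite cc_u mxE.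
by case: (eqVneq l i) => [->|] //=; rewrite eqxx.
Qed.


Lemma cancel_U p (X Y : 'M[C]_(p, n)) : X *m U = Y *m U -> X = Y.
Proof. by move=> h; rewrite -[X]mulmx1 -[Y]mulmx1 -UU !mulmxA h. Qed.

Section WithP.
Variables (m : nat) (P : 'M[C]_(m, n)) (F : set 'rV[R]_d).
Hypotheses (PP : P *m adjmx P = 1%:M)
  (HP : forall psi : 'cV[C]_n, (exists x : 'cV[C]_m, psi = adjmx P *m x) <-> in_HF A F psi).

Fact Q_key : unit. Proof. exact: tt. Qed.
Definition Q := locked_with Q_key (adjmx P *m P).
Lemma QE : Q = adjmx P *m P. Proof. by rewrite /Q unlock. Qed.

Lemma QP : Q *m adjmx P = adjmx P.
Proof. by rewrite QE -mulmxA PP mulmx1. Qed.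
Lemma PQ : P *m Q = P.
Proof. by rewrite QE mulmxA PP mul1mx. Qed.
Lemma QQ : Q *m Q = Q.
Proof. by rewrite {1}QE -mulmxA PQ QE. Qed.
Lemma Qh : adjmx Q = Q.
Proof. by rewrite QE adjmxM adjmxK. Qed.

Lemma Pu0 i : ~ F (om i) -> P *m u i = 0.
Proof.
move=> nF.
have h j : (adjmx U *m adjmx P) i j = 0.
  have : in_HF A F (adjmx P *m delta_mx j (0:'I_1)).
    by apply/HP; exists (delta_mx j (0:'I_1)).
  move/HF_coord => /(_ i); rewrite mulmxA -colE mxE.
  by case: eqP => // _ /(_ isT).
apply/matrixP => a b; rewrite ord1 /u mulmxA -colE [RHS]mxE.
have -> : P *m U = adjmx (adjmx U *m adjmx P) by rewrite adjmxM !adjmxK.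
by rewrite mxE adjmxE h conjc0.
Qed.

Lemma Qu i : Q *m u i = if `[< F (om i) >] then u i else 0.
Proof.
case: asboolP => Fi.
  have [x ->] : exists x, u i = adjmx P *m x by apply/HP; apply: HF_u.
  by rewrite mulmxA QP.
by rewrite QE -mulmxA Pu0 // mulmx0.
Qed.

Lemma coordQ (psi : 'cV[C]_n) i : Q *m psi = psi -> ~ F (om i) -> (adjmx U *m psi) i 0 = 0.
Proof.
move=> Hq nF; rewrite -Hq mulmxA -Qh -adjmxM mxE big1 // => j _.
rewrite adjmxE.
have -> : (Q *m U) j i = (Q *m u i) j 0 by rewrite /u mulmxA -colE [RHS]mxE.
by rewrite Qu (asboolF nF) mxE conjc0 mul0r.
Qed.

Lemma iotaQ v : iota_map A v *m Q = Q *m iota_map A v.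
Proof.
apply: cancel_U; apply: colext => i.
rewrite -!mulmxA -/(u i) Qu iota_u -scalemxAr Qu.
by case: asboolP => _; rewrite ?iota_u ?mulmx0 ?scaler0.
Qed.

Lemma restr_iota v : iota_map (restrA P A) v = P *m iota_map A v *m adjmx P.
Proof.
rewrite /iota_map /restrA.
under eq_bigr do rewrite scalemxAl scalemxAr.
by rewrite -mulmx_suml -mulmx_sumr.
Qed.

Lemma part1 : abelian_th A -> abelian_th (restrA P A).
Proof.
move=> Ab v w; rewrite !restr_iota.
have E x y : P *m iota_map A x *m adjmx P *m (P *m iota_map A y *m adjmx P)
   = P *m (iota_map A x *m iota_map A y) *m adjmx P.
  by rewrite !mulmxA -(mulmxA _ (adjmx P) P) -QE -(mulmxA _ _ Q) iotaQ !mulmxA PQ.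
by rewrite !E Ab.
Qed.

Lemma part2 al : weight_set (restrA P A) al <-> weight_set A al /\ F al.
Proof.
rewrite /weight_set /=; split.
  move=> [x [xn Wx]].
  set psi := adjmx P *m x.
  have Qpsi : Q *m psi = psi by rewrite /psi mulmxA QP.
  have psin : psi != 0.
    by apply: contraNneq xn => h; rewrite -[x]mul1mx -PP -mulmxA -/psi h mulmx0.
  have Wpsi : in_wspace A al psi.
    move=> v; rewrite -{1}Qpsi mulmxA iotaQ -mulmxA /psi.
    rewrite QE -!mulmxA.
    have -> : P *m (iota_map A v *m (adjmx P *m x)) = iota_map (restrA P A) v *m x.
      by rewrite restr_iota !mulmxA.
    by rewrite Wx scalemxAr.
  have cn : adjmx U *m psi != 0.
    by apply: contraNneq psin => h; rewrite (psi_U psi) h mulmx0.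
  have [i [j cij]] := rV_neq0 cn; rewrite ord1 in cij.
  have oi := (proj1 (wspaceP al psi) Wpsi i cij).
  split; first by exists psi.
  rewrite -oi; apply: contrapT => nF.
  by move: cij; rewrite (coordQ Qpsi nF) eqxx.
move=> [Wa Fa]; have [i oi] := proj1 (weightP al) Wa.
have Fi : F (om i) by rewrite oi.
have Qui : adjmx P *m (P *m u i) = u i by rewrite mulmxA -QE Qu asboolT.
exists (P *m u i); split.
  by apply: contraNneq (u_neq0 i) => h; rewrite -Qui h mulmx0.
move=> v; rewrite restr_iota -mulmxA Qui -mulmxA iota_u -scalemxAr oi.
by [].
Qed.

End WithP.
Definition pr (G : 'M[C]_n) i := complex.Re ((adjmx U *m G *m U) i i).

Lemma adj_e i : adjmx (e i) = delta_mx 0 i.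
Proof.
apply/matrixP => a b; rewrite !mxE ord1 eqxx andbT.
by case: (b == i); rewrite ?conjc1 ?conjc0.
Qed.

Lemma quad_e (X : 'M[C]_n) i : (adjmx (e i) *m X *m e i) 0 0 = X i i.
Proof. by rewrite adj_e -rowE -colE !mxE. Qed.

Lemma pr_quad G i : (adjmx U *m G *m U) i i = (adjmx (u i) *m G *m u i) 0 0.
Proof. by rewrite /u adjmxM -quad_e !mulmxA. Qed.

Lemma pr_ge0 G i : density_op G -> 0 <= pr G i.
Proof. by move=> [_ [H _]]; rewrite /pr pr_quad; apply: cge0_Re. Qed.

Lemma pr_sum G : density_op G -> \sum_i pr G i = 1.
Proof.
move=> [_ [_ Ht]]; rewrite /pr -cRe_sum.
have -> : \sum_i (adjmx U *m G *m U) i i = \tr (adjmx U *m G *m U) by [].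
by rewrite -mulmxA mxtrace_mulC -mulmxA UU mulmx1 Ht.
Qed.

Lemma istarE G : istar A G = \sum_i pr G i *: om i.
Proof.
apply/rowP => k; rewrite !mxE summxE.
rewrite AE !mulmxA mxtrace_mulC !mulmxA /mxtrace cRe_sum; apply: eq_bigr => i _.
rewrite mul_mx_diag [X in complex.Re X]mxE [X in _ * X]mxE.
rewrite cReMl.
by rewrite [RHS]mxE /pr /om [X in _ = _ * X]mxE.
Qed.

Lemma pr_u0 G i : G *m u i = 0 -> pr G i = 0.
Proof. by move=> h; rewrite /pr pr_quad -mulmxA h mulmx0 mxE. Qed.

Lemma psd0 (G : 'M[C]_n) (x : 'cV[C]_n) : is_herm G ->
  (forall psi : 'cV[C]_n, 0 <= (adjmx psi *m G *m psi) 0 0) ->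
  complex.Re ((adjmx x *m G *m x) 0 0) = 0 -> G *m x = 0.
Proof.
move=> Gh Gp hz; set y := G *m x.
have Hy1 : adjmx x *m G *m y = adjmx y *m y by rewrite /y adjmxM Gh.
have Hy2 : adjmx y *m G *m x = adjmx y *m y by rewrite -mulmxA.
set a := complex.Re ((adjmx y *m y) 0 0).
set b := complex.Re ((adjmx y *m G *m y) 0 0).
have b0 : 0 <= b by apply: cge0_Re.
have key (t : R) : 0 <= 2 * t * a + t ^+ 2 * b.
  have := cge0_Re (Gp (x + t%:C *: y)).
  rewrite adjmxD adjmxZ (conjcR t) !mulmxDl !mulmxDr -!scalemxAl -!scalemxAr.
  rewrite Hy1 Hy2.
  move: hz; rewrite /a /b.
  move: (adjmx x *m G *m x) (adjmx y *m y) (adjmx y *m G *m y) => X1 X2 X3 hz.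
  rewrite !mxE !cReD !cReMr hz => h.
  nra.
have a0 : 0 <= a by apply: Re_norm_ge0.
have aeq : a = 0.
  pose s := b + 1; have s0 : 0 < s by rewrite /s; lra.
  pose t := - a / s.
  have ts : t * s = - a by rewrite /t mulrC mulrCA mulfV ?mulr1 // gt_eqF.
  have hs : s = b + 1 by [].
  have e : 2 * t * a + t ^+ 2 * b = - (t ^+ 2 * (s + 1)).
    have -> : a = - (t * s) by rewrite ts opprK.
    rewrite hs; ring.
  have h1 := key t; rewrite e oppr_ge0 in h1.
  have t0 : t = 0.
    have : t ^+ 2 <= 0 by nra.
    by rewrite expr2 => h2; nra.
  by rewrite -[a]opprK -ts t0 mul0r oppr0.
by apply: vec0.
Qed.

Lemma pr0 G i : density_op G -> pr G i = 0 -> G *m u i = 0.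
Proof. by move=> [Gh [Gp _]] h; apply: psd0 => //; rewrite -pr_quad. Qed.

Lemma mul11 (M N : 'M[C]_1) : (M *m N) 0 0 = M 0 0 * N 0 0.
Proof. by rewrite mxE big_ord1. Qed.

Lemma pure_density (G : 'M[C]_n) : pure_state G -> density_op G.
Proof.
move=> [psi [h1 ->]]; split; first by rewrite /is_herm adjmxM adjmxK.
split.
  move=> x; rewrite mulmxA -mulmxA mul11.
  have -> : (adjmx psi *m x) 0 0 = conjc ((adjmx x *m psi) 0 0).
    by rewrite -adjmxE adjmxM adjmxK.
  exact: mulcJ_ge0.
by rewrite mxtrace_mulC /mxtrace big_ord1.
Qed.

Lemma conv_istar G : density_op G -> conv_hull (weight_set A) (istar A G).
Proof.
move=> DG; exists n, om, (pr G); split; last split; last split.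
- by move=> j; apply/weightP; exists j.
- by move=> j; apply: pr_ge0.
- exact: pr_sum.
- exact: istarE.
Qed.

Lemma weight_conv x : weight_set A x -> conv_hull (weight_set A) x.
Proof.
move=> Wx; exists 1%N, (fun=> x), (fun=> 1); split; last split; last split.
- by [].
- by move=> _; apply: ler01.
- by rewrite big_ord1.
- by rewrite big_ord1 scale1r.
Qed.

Section Facet.
Variables (F : set 'rV[R]_d) (v0 : 'rV[R]_d) (c0 : R).
Hypotheses (Hsupp : forall x, conv_hull (weight_set A) x -> dpair x v0 <= c0)
  (HFe : F = [set x | conv_hull (weight_set A) x /\ dpair x v0 = c0]).

Lemma FP (x : 'rV[R]_d) : weight_set A x -> F x <-> dpair x v0 = c0.
Proof.
move=> Wx; rewrite HFe /=; split; first by case.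
by move=> h; split => //; apply: weight_conv.
Qed.

Lemma conv_eq N (p : 'I_N -> 'rV[R]_d) (l : 'I_N -> R) :
  (forall j, weight_set A (p j)) -> (forall j, 0 <= l j) -> \sum_j l j = 1 ->
  (dpair (\sum_j l j *: p j) v0 = c0 <-> forall j, l j != 0 -> F (p j)).
Proof.
move=> Hw Hl Hs; rewrite dpair_comb.
have E : c0 - \sum_j l j * dpair (p j) v0 = \sum_j l j * (c0 - dpair (p j) v0).
  under [RHS]eq_bigr do rewrite mulrBr.
  by rewrite sumrB -mulr_suml Hs mul1r.
have Hnn : forall j, true -> 0 <= l j * (c0 - dpair (p j) v0).
  move=> j _; apply: mulr_ge0 => //; rewrite subr_ge0; apply: Hsupp.
  exact: weight_conv.
split.
  move=> h j lj.
  have h0 : \sum_j l j * (c0 - dpair (p j) v0) = 0 by rewrite -E h subrr.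
  have := psumr_eq0P Hnn h0 (i := j) isT => /eqP; rewrite mulf_eq0 (negPf lj) /=.
  by rewrite subr_eq0 => /eqP h1; apply/FP.
move=> H; apply/eqP; rewrite -subr_eq0 -oppr_eq0 opprB E; apply/eqP; apply: big1 => j _.
case: (eqVneq (l j) 0) => [->|lj]; first by rewrite mul0r.
by have := H j lj; move/(FP (Hw j)) => ->; rewrite subrr mulr0.
Qed.

Lemma F_istar G : density_op G ->
  (F (istar A G) <-> forall i, ~ F (om i) -> G *m u i = 0).
Proof.
move=> DG.
have -> : F (istar A G) <-> dpair (istar A G) v0 = c0.
  rewrite HFe /=; split; first by case.
  by move=> h; split => //; apply: conv_istar.
have Hw : forall j, weight_set A (om j) by move=> j; apply/weightP; exists j.
rewrite istarE (conv_eq Hw (fun j => pr_ge0 j DG) (pr_sum DG)).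
split.
  move=> H i nF; apply: pr0 => //.
  by case: (eqVneq (pr G i) 0) => // h; exfalso; exact: (nF (H i h)).
move=> H j pj; apply: contrapT => nF.
by move: pj; rewrite pr_u0 ?eqxx //; exact: H.
Qed.

End Facet.

Lemma scal_u (a b : R) i : a%:C *: u i = b%:C *: u i -> a = b.
Proof.
move=> /(congr1 (mulmx (adjmx U))); rewrite -!scalemxAr cc_u.
by move/matrixP/(_ i 0); rewrite !mxE !eqxx !mulr1 => -[].
Qed.

Lemma conv_diff N (p : 'I_N -> 'rV[R]_d) (l : 'I_N -> R) s0 :
  \sum_j l j = 1 -> \sum_j l j *: p j - s0 = \sum_j l j *: (p j - s0).
Proof.
move=> Hs; under [RHS]eq_bigr do rewrite scalerBr.
by rewrite sumrB -scaler_suml Hs scale1r.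
Qed.

Lemma kerP N (M : 'M[R]_(N,d)) v :
  (v <= kermx M^T)%MS <-> forall i, dpair (row i M) v = 0.
Proof.
have E i : (v *m M^T) 0 i = dpair (row i M) v.
  by rewrite mxE /dpair; apply: eq_bigr => k _; rewrite !mxE mulrC.
rewrite sub_kermx; split.
  by move/eqP/rowP => h i; rewrite -E h mxE.
by move=> h; apply/eqP/rowP => i; rewrite E h mxE.
Qed.

Lemma has_dim_ker (S : set 'rV[R]_d) p (X : 'M[R]_(p, d)) :
  (forall v, S v <-> (v <= X)%MS) -> has_dim S (\rank X).
Proof.
move=> H; exists (row_base X); split; first exact: row_base_free.
by move=> v; rewrite eq_row_base; apply: H.
Qed.

Section All.
Variables (m : nat) (P : 'M[C]_(m, n)) (F : set 'rV[R]_d) (v0 : 'rV[R]_d) (c0 : R).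
Hypotheses (PP : P *m adjmx P = 1%:M)
  (HP : forall psi : 'cV[C]_n, (exists x : 'cV[C]_m, psi = adjmx P *m x) <-> in_HF A F psi)
  (Hsupp : forall x, conv_hull (weight_set A) x -> dpair x v0 <= c0)
  (HFe : F = [set x | conv_hull (weight_set A) x /\ dpair x v0 = c0]).

Local Notation Q := (Q P).

Lemma F_istar_Q G : density_op G -> (F (istar A G) <-> G = Q *m G *m Q).
Proof.
move=> DG; have [Gh _] := DG; rewrite (F_istar Hsupp HFe DG); split.
  move=> H.
  have GQ : G *m Q = G.
    apply: cancel_U; apply: colext => i; rewrite -!mulmxA -/(u i) (Qu PP HP).
    by case: asboolP => Fi //; rewrite mulmx0 H.
  have QG : Q *m G = G by rewrite -[in LHS]Gh -(Qh P) -adjmxM GQ Gh.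
  by rewrite -mulmxA GQ QG.
move=> Hq i nF; rewrite Hq -mulmxA (Qu PP HP) (asboolF nF) mulmx0.
by [].
Qed.

Lemma imgQ (G' : 'M[C]_m) : Q *m (adjmx P *m G' *m P) *m Q = adjmx P *m G' *m P.
Proof. by rewrite !mulmxA (QP PP) -mulmxA (PQ PP). Qed.

Lemma part4 G : pure_state G -> (F (istar A G) <-> in_PF P G).
Proof.
move=> [psi [h1 HG]].
have DG : density_op G by apply: pure_density; exists psi.
rewrite (F_istar_Q DG); split; last first.
  by move=> [G' [_ ->]]; rewrite imgQ.
move=> Hq.
have e1 : adjmx psi *m psi = 1%:M.
  by apply/matrixP => a b; rewrite !ord1 h1 mxE eqxx mulr1n.
have pG : G *m psi = psi by rewrite HG -mulmxA e1 mulmx1.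
have Qpsi : Q *m psi = psi.
  have : Q *m (Q *m G *m Q *m psi) = Q *m G *m Q *m psi by rewrite !mulmxA (QQ PP).
  by rewrite -Hq pG.
exists (P *m G *m adjmx P); split; last by rewrite {1}Hq QE !mulmxA.
exists (P *m psi); split; last by rewrite HG adjmxM !mulmxA.
by rewrite adjmxM mulmxA -(mulmxA _ (adjmx P) P) -QE -mulmxA Qpsi h1.
Qed.

Lemma img_density (G' : 'M[C]_m) : density_op G' -> density_op (adjmx P *m G' *m P).
Proof.
move=> [Gh [Gp Gt]]; split; first by rewrite /is_herm !adjmxM adjmxK Gh mulmxA.
split; last by rewrite -mulmxA mxtrace_mulC -mulmxA PP mulmx1.
by move=> x; have := Gp (P *m x); rewrite adjmxM !mulmxA.
Qed.

Lemma img_pure (G' : 'M[C]_m) : pure_state G' -> pure_state (adjmx P *m G' *m P).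
Proof.
move=> [x [h1 ->]]; exists (adjmx P *m x); split.
  by rewrite adjmxM adjmxK mulmxA -(mulmxA (adjmx x)) PP mulmx1.
by rewrite adjmxM adjmxK !mulmxA.
Qed.

Lemma part5 G : density_op G -> (F (istar A G) <-> in_EF P G).
Proof.
move=> DG; rewrite (F_istar_Q DG); split; last first.
  by move=> [G' [_ ->]]; rewrite imgQ.
move=> Hq; exists (P *m G *m adjmx P); split; last by rewrite {1}Hq QE !mulmxA.
have [Gh [Gp Gt]] := DG.
have QG : Q *m G = G by rewrite [in LHS]Hq !mulmxA (QQ PP) -Hq.
split; first by rewrite /is_herm !adjmxM adjmxK Gh mulmxA.
split; first by move=> x; have := Gp (adjmx P *m x); rewrite adjmxM adjmxK !mulmxA.
by rewrite mxtrace_mulC mulmxA -QE QG.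
Qed.

Lemma istar_img (G' : 'M[C]_m) : istar A (adjmx P *m G' *m P) = istar (restrA P A) G'.
Proof.
apply/rowP => k; rewrite !mxE /restrA; congr complex.Re.
by rewrite -!mulmxA mxtrace_mulC !mulmxA.
Qed.

Lemma val_img (G' : 'M[C]_m) W :
  \tr (adjmx P *m G' *m P *m W) = \tr (G' *m restrW P W).
Proof. by rewrite /restrW -!mulmxA mxtrace_mulC !mulmxA. Qed.

Lemma part6a W rho : F rho -> Fp (restrA P A) (restrW P W) rho = Fp A W rho.
Proof.
move=> Fr; rewrite /Fp; congr ereal_inf; apply/seteqP; split => y /= [G [HG [Hi ->]]].
  exists (adjmx P *m G *m P); split; first exact: img_pure.
  by rewrite istar_img val_img.
have : in_PF P G by apply/(part4 HG); rewrite Hi.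
move=> [G' [HG' EG]]; exists G'; split => //.
by rewrite -istar_img -EG -val_img -EG.
Qed.

Lemma part6b W rho : ~ F rho -> Fp (restrA P A) (restrW P W) rho = +oo%E.
Proof.
move=> nF; rewrite /Fp -(ereal_inf0 R); congr ereal_inf.
apply/seteqP; split => y //= [G [HG [Hi _]]]; apply: nF.
rewrite -Hi -istar_img; apply/(part4 (img_pure HG)); exists G; split => //.
Qed.

Lemma part7a W rho : F rho -> Fe (restrA P A) (restrW P W) rho = Fe A W rho.
Proof.
move=> Fr; rewrite /Fe; congr ereal_inf; apply/seteqP; split => y /= [G [HG [Hi ->]]].
  exists (adjmx P *m G *m P); split; first exact: img_density.
  by rewrite istar_img val_img.
have : in_EF P G by apply/(part5 HG); rewrite Hi.
move=> [G' [HG' EG]]; exists G'; split => //.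
by rewrite -istar_img -EG -val_img -EG.
Qed.

Lemma part7b W rho : ~ F rho -> Fe (restrA P A) (restrW P W) rho = +oo%E.
Proof.
move=> nF; rewrite /Fe -(ereal_inf0 R); congr ereal_inf.
apply/seteqP; split => y //= [G [HG [Hi _]]]; apply: nF.
rewrite -Hi -istar_img; apply/(part5 (img_density HG)); exists G; split => //.
Qed.

Lemma exists_i1 : (exists x, F x) -> exists i, F (om i).
Proof.
move=> [x Fx]; move: (Fx); rewrite {1}HFe => -[[N [p [l [Hw [Hl [Hs Hx]]]]]] hd].
have Hc := proj1 (conv_eq Hsupp HFe Hw Hl Hs); rewrite -Hx in Hc; have Hc' := Hc hd.
have [j lj] : exists j, l j != 0.
  apply: contrapT => hn; move: Hs; rewrite big1 => [/eqP|j _]; first by rewrite eq_sym oner_eq0.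
  by case: (eqVneq (l j) 0) => // h; exfalso; apply: hn; exists j.
have [i oi] := proj1 (weightP (p j)) (Hw j).
by exists i; rewrite oi; apply: Hc'.
Qed.

Lemma span1P i1 v : pre_span1 A v <-> forall i, dpair (om i) v = dpair (om i1) v.
Proof.
split.
  move=> [c h].
  have E i : dpair (om i) v = c.
    apply: (@scal_u _ _ i); rewrite -iota_u h mul_scalar_mx //.
  by move=> i; rewrite !E.
move=> h; exists (dpair (om i1) v).
apply: cancel_U; apply: colext => i; rewrite -!mulmxA -/(u i) iota_u h.
by rewrite mul_scalar_mx.
Qed.

Lemma span1rP i1 v : F (om i1) -> (pre_span1 (restrA P A) v <->
  forall i, F (om i) -> dpair (om i) v = dpair (om i1) v).
Proof.
move=> F1; split.
  move=> [c h].
  have E i : F (om i) -> dpair (om i) v = c.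
    move=> Fi; have Qui : Q *m u i = u i by rewrite (Qu PP HP) asboolT.
    apply: (@scal_u _ _ i); rewrite -iota_u -{1}Qui mulmxA (iotaQ PP HP v) QE -!mulmxA.
    have -> : P *m (iota_map A v *m u i) = iota_map (restrA P A) v *m (P *m u i).
      by rewrite restr_iota -!mulmxA (mulmxA (adjmx P)) -QE Qui.
    by rewrite h mul_scalar_mx -scalemxAr mulmxA -QE Qui.
  by move=> i Fi; rewrite !E.
move=> h; exists (dpair (om i1) v).
have iQ : iota_map A v *m Q = ((dpair (om i1) v)%:C)%:M *m Q.
  apply: cancel_U; apply: colext => i; rewrite -!mulmxA -/(u i) (Qu PP HP).
  case: asboolP => Fi; last by rewrite !mulmx0.
  by rewrite iota_u h // mul_scalar_mx.
rewrite restr_iota -{1}(QP PP) !mulmxA -(mulmxA _ _ (Q)) iQ.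
rewrite mul_scalar_mx -scalemxAr -scalemxAl -mulmxA (QP PP) PP.
by rewrite scalemx1.
Qed.

Lemma part3 k : (exists x, F x) -> has_affdim F k ->
  has_affdim (conv_hull (weight_set A)) k.+1 ->
  exists kk, has_dim (pre_span1 A) kk /\ has_dim (pre_span1 (restrA P A)) kk.+1.
Proof.
move=> Fne HFk HQk; have [i1 F1] := exists_i1 Fne.
pose M1 := \matrix_(i < n) (om i - om i1).
pose M2 := \matrix_(i < n) (if `[< F (om i) >] then om i - om i1 else 0).
have r1 : \rank M1 = k.+1.
  apply: (affrank (s0 := om i1) (g := om) _ _ _ _ HQk).
  - exact: weight_conv (proj2 (weightP _) (ex_intro _ i1 erefl)).
  - by move=> j; apply: weight_conv; apply/weightP; exists j.
  - by move=> j; rewrite rowK.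
  move=> s [N [p [l [Hw [Hl [Hs ->]]]]]]; rewrite conv_diff //.
  apply: summx_sub => j _; apply: scalemx_sub.
  have [i <-] := proj1 (weightP _) (Hw j).
  by apply: (eq_row_sub i); rewrite rowK.
have r2 : \rank M2 = k.
  apply: (affrank (s0 := om i1) (g := fun i => if `[< F (om i) >] then om i else om i1) F1 _ _ _ HFk).
  - by move=> j; case: asboolP.
  - by move=> j; rewrite rowK; case: asboolP => //; rewrite subrr.
  move=> s Fs; move: (Fs); rewrite {1}HFe => -[[N [p [l [Hw [Hl [Hs Hx]]]]]] hd].
  have Hc := proj1 (conv_eq Hsupp HFe Hw Hl Hs); rewrite -Hx in Hc; have Hc' := Hc hd.
  rewrite Hx conv_diff //; apply: summx_sub => j _.
  case: (eqVneq (l j) 0) => [->|lj]; first by rewrite scale0r sub0mx.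
  apply: scalemx_sub; have [i oi] := proj1 (weightP _) (Hw j).
  have Fi : F (om i) by rewrite oi; apply: Hc'.
  by apply: (eq_row_sub i); rewrite rowK asboolT // oi.
have kd : (k.+1 <= d)%N by rewrite -r1 rank_leq_col.
exists (d - k.+1)%N; split.
  have := @has_dim_ker (pre_span1 A) _ (kermx M1^T).
  rewrite mxrank_ker mxrank_tr r1; apply => v.
  rewrite (span1P i1) kerP; split => h i; move: (h i); rewrite rowK dpairB.
    by move=> ->; rewrite subrr.
  by move/eqP; rewrite subr_eq0 => /eqP.
have := @has_dim_ker (pre_span1 (restrA P A)) _ (kermx M2^T).
rewrite mxrank_ker mxrank_tr r2.
have -> : (d - k = (d - k.+1).+1)%N by lia.
apply => v; rewrite (span1rP _ F1) kerP; split => h i; move: (h i); rewrite rowK.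
  case: asboolP => Fi.
    by move=> /(_ Fi); rewrite dpairB => ->; rewrite subrr.
  by move=> _; rewrite dpairE mul0mx mxE.
case: asboolP => Fi; last by move=> _ /Fi.
by rewrite dpairB => /eqP; rewrite subr_eq0 => /eqP ->.
Qed.

End All.

End WithU.

End Helpers.
Import Helpers.

Local Open Scope classical_set_scope.

Theorem proposition4p11 (R : realType) (d n m : nat)
    (A : 'I_d -> 'M[R[i]]_n) (W : 'M[R[i]]_n) (F : set 'rV[R]_d)
    (P : 'M[R[i]]_(m, n)) :
  (forall k, is_herm (A k)) -> is_herm W -> abelian_th A ->
  is_facet (conv_hull (weight_set A)) F ->
  (* P : H -> C^m identifies H_F with C^m: P P^dagger = 1 and the
     range of P^dagger (= the orthogonal complement of ker P) is H_F *)
  P *m adjmx P = 1%:M ->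
  (forall psi : 'cV[R[i]]_n, (exists x : 'cV[R[i]]_m, psi = adjmx P *m x)
                             <-> in_HF A F psi) ->
  (* (1) *) abelian_th (restrA P A) /\
  (* (2) *) (forall alpha, weight_set (restrA P A) alpha <-> weight_set A alpha /\ F alpha) /\
  (* (3) *) (exists k : nat, has_dim (pre_span1 A) k /\
                             has_dim (pre_span1 (restrA P A)) k.+1) /\
  (* (4) *) (forall G : 'M[R[i]]_n, pure_state G -> (F (istar A G) <-> in_PF P G)) /\
  (* (5) *) (forall G : 'M[R[i]]_n, density_op G -> (F (istar A G) <-> in_EF P G)) /\
  (* (6) *) (forall rho, F rho -> Fp (restrA P A) (restrW P W) rho = Fp A W rho) /\
            (forall rho, ~ F rho -> Fp (restrA P A) (restrW P W) rho = +oo%E) /\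
  (* (7) *) (forall rho, F rho -> Fe (restrA P A) (restrW P W) rho = Fe A W rho) /\
            (forall rho, ~ F rho -> Fe (restrA P A) (restrW P W) rho = +oo%E).
Proof.
move=> Ah Wh Ab [[v0 [c0 [Hsupp HFe]]] [Fne [k [HFk HQk]]]] PP HP.
have [U [lam [UU UU' AE]]] := spectral_decomp Ah Ab.
split; first exact: (part1 UU UU' AE PP HP Ab).
split; first exact: (part2 UU UU' AE PP HP).
split; first exact: (part3 UU UU' AE PP HP Hsupp HFe Fne HFk HQk).
split; first by move=> G HG; exact: (part4 UU UU' AE PP HP Hsupp HFe HG).
split; first by move=> G HG; exact: (part5 UU UU' AE PP HP Hsupp HFe HG).
split; first by move=> rho; exact: (part6a UU UU' AE PP HP Hsupp HFe W).
split; first by move=> rho; exact: (part6b UU UU' AE PP HP Hsupp HFe W).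
split; first by move=> rho; exact: (part7a UU UU' AE PP HP Hsupp HFe W).
by move=> rho; exact: (part7b UU UU' AE PP HP Hsupp HFe W).
Qed.
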